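(* Let $D\subseteq\mathbb{R}^{p+2}$ be a domain invariant under $(\mathbf{x}_p,r)\mapsto(\mathbf{x}_p,-r)$ and let $f(\mathbf{x})=F_1(\mathbf{x}')+\underline{\omega}F_2(\mathbf{x}')$ be a generalized partial-slice function on $\Omega_D$ induced by a $C^1$ stem function, with $f\in C^1(\Omega_D,\mathbb{A})$. Then $f$ is monogenic on $\Omega_D$ (i.e. $D_{\mathbf{x}}f=0$) if and only if $$D_{\mathbf{x}_p}F_1(\mathbf{x}')-\partial_rF_2(\mathbf{x}')=\frac{q-1}{r}F_2(\mathbf{x}'),\qquad \overline{D}_{\mathbf{x}_p}F_2(\mathbf{x}')+\partial_rF_1(\mathbf{x}')=0,\qquad \mathbf{x}'=(\mathbf{x}_p,r)\in D,\ r\neq0.$$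
   Context: Let $\mathbb{A}$ be a real alternative algebra (the associator $[a,b,c]=(ab)c-a(bc)$ is an alternating trilinear function) with unity $1$, of finite real dimension $d>1$, equipped with an anti-involution $a\mapsto a^c$ (real linear, $a^c=a$ for real $a$, $(a^c)^c=a$, $(ab)^c=b^ca^c$). Let $t(x)=x+x^c$, $n(x)=xx^c$, $\mathbb{S}_{\mathbb{A}}=\{x: t(x)=0,\ n(x)=1\}$ (assumed nonempty) and $Q_{\mathbb{A}}=\mathbb{R}\cup\{x: t(x)\in\mathbb{R},\ n(x)\in\mathbb{R},\ 4n(x)>t(x)^2\}$. Let $M$ be a real subspace with $\mathbb{R}\subsetneq M\subseteq Q_{\mathbb{A}}$ having a basis $(v_0,\dots,v_m)$, $m\ge1$, $v_0=1$, $v_s\in\mathbb{S}_{\mathbb{A}}$, $v_sv_t=-v_tv_s$ for distinct $s,t\ge1$; complete it to a basis of $\mathbb{A}$ with associated Euclidean norm. Identify $x=\sum x_sv_s\in M$ with $(x_0,\dots,x_m)\in\mathbb{R}^{m+1}$; differentiate componentwise. Fix $p\in\{0,\dots,m-1\}$, $q=m-p$; $\mathbf{x}=\mathbf{x}_p+\underline{\mathbf{x}}_q$ with $\mathbf{x}_p=\sum_{s=0}^px_sv_s\in\mathbb{R}^{p+1}$, $\underline{\mathbf{x}}_q=\sum_{s=p+1}^m x_sv_s$; $\mathbb{S}=\{\sum_{s=p+1}^m x_sv_s:\sum x_s^2=1\}$; $\underline{\mathbf{x}}_q=r\underline{\omega}$, $r=|\underline{\mathbf{x}}_q|$; $\mathbf{x}'=(\mathbf{x}_p,r)$.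 $D_{\mathbf{x}_p}f=\sum_{s=0}^p v_s\partial_{x_s}f$, $\overline{D}_{\mathbf{x}_p}f=\partial_{x_0}f-\sum_{s=1}^pv_s\partial_{x_s}f$, $D_{\mathbf{x}}f=\sum_{s=0}^mv_s\partial_{x_s}f$. $\Omega_D=\{\mathbf{x}_p+r\underline{\omega}:(\mathbf{x}_p,r)\in D,\ r\ge0,\ \underline{\omega}\in\mathbb{S}\}$. A stem function $(F_1,F_2):D\to\mathbb{A}^2$ has $F_1$ even and $F_2$ odd in $r$ and induces the generalized partial-slice function $f(\mathbf{x}_p+r\underline{\omega})=F_1(\mathbf{x}')+\underline{\omega}F_2(\mathbf{x}')$. *)

(* Defs.v *)
From HB Require Import structures.
From mathcomp Require Import all_boot all_order all_algebra.
From mathcomp Require Import all_classical all_reals all_analysis.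
Set Implicit Arguments. Unset Strict Implicit. Unset Printing Implicit Defensive.
Import Order.TTheory GRing.Theory Num.Theory.
Import numFieldNormedType.Exports.
Local Open Scope classical_set_scope.
Local Open Scope ring_scope.

(* The algebra A is modelled on its underlying real vector space
   'rV[R]_d.+1 (finite dimension d.+1), with a bilinear product [mul],
   unity [one] and anti-involution [conj]. *)

Definition assoc (R : realType) (d : nat)
  (mul : 'rV[R]_d.+1 -> 'rV[R]_d.+1 -> 'rV[R]_d.+1) (a b c : 'rV[R]_d.+1) :=
  mul (mul a b) c - mul a (mul b c).

Definition alt_algebra_anti_inv (R : realType) (d : nat)
  (mul : 'rV[R]_d.+1 -> 'rV[R]_d.+1 -> 'rV[R]_d.+1) (one : 'rV[R]_d.+1)
  (conj : 'rV[R]_d.+1 -> 'rV[R]_d.+1) : Prop :=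
  (forall (k : R) a b c, mul (k *: a + b) c = k *: mul a c + mul b c) /\
  (forall (k : R) a b c, mul c (k *: a + b) = k *: mul c a + mul c b) /\
  (forall a, mul one a = a /\ mul a one = a) /\
  (forall a b, assoc mul a a b = 0 /\ assoc mul a b a = 0 /\ assoc mul b a a = 0) /\
  (forall (k : R) a b, conj (k *: a + b) = k *: conj a + conj b) /\
  (forall k : R, conj (k *: one) = k *: one) /\
  (forall a, conj (conj a) = a) /\
  (forall a b, conj (mul a b) = mul (conj b) (conj a)).

Definition is_realA (R : realType) (d : nat) (one : 'rV[R]_d.+1) (a : 'rV[R]_d.+1) :=
  exists k : R, a = k *: one.

Definition trA (R : realType) (d : nat) (conj : 'rV[R]_d.+1 -> 'rV[R]_d.+1) a :=
  a + conj a.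

Definition nA (R : realType) (d : nat)
  (mul : 'rV[R]_d.+1 -> 'rV[R]_d.+1 -> 'rV[R]_d.+1)
  (conj : 'rV[R]_d.+1 -> 'rV[R]_d.+1) a := mul a (conj a).

Definition in_SA (R : realType) (d : nat)
  (mul : 'rV[R]_d.+1 -> 'rV[R]_d.+1 -> 'rV[R]_d.+1) (one : 'rV[R]_d.+1)
  (conj : 'rV[R]_d.+1 -> 'rV[R]_d.+1) (a : 'rV[R]_d.+1) :=
  trA conj a = 0 /\ nA mul conj a = one.

Definition in_QA (R : realType) (d : nat)
  (mul : 'rV[R]_d.+1 -> 'rV[R]_d.+1 -> 'rV[R]_d.+1) (one : 'rV[R]_d.+1)
  (conj : 'rV[R]_d.+1 -> 'rV[R]_d.+1) (a : 'rV[R]_d.+1) :=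
  is_realA one a \/
  exists t n : R, trA conj a = t *: one /\ nA mul conj a = n *: one /\
                  t ^+ 2 < 4 * n.

(* (v_0,...,v_m) is a basis of a subspace M with R ⊊ M ⊆ Q_A as in the paper *)
Definition admissible_basis (R : realType) (d m : nat)
  (mul : 'rV[R]_d.+1 -> 'rV[R]_d.+1 -> 'rV[R]_d.+1) (one : 'rV[R]_d.+1)
  (conj : 'rV[R]_d.+1 -> 'rV[R]_d.+1) (v : 'I_m.+1 -> 'rV[R]_d.+1) : Prop :=
  v ord0 = one /\
  (forall s, s != ord0 -> in_SA mul one conj (v s)) /\
  (forall s t, s != ord0 -> t != ord0 -> s != t ->
      mul (v s) (v t) = - mul (v t) (v s)) /\
  (forall c : 'I_m.+1 -> R, \sum_(s < m.+1) c s *: v s = 0 -> forall s, c s = 0) /\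
  (forall c : 'I_m.+1 -> R, in_QA mul one conj (\sum_(s < m.+1) c s *: v s)).

(* the element sum_s x_s v_s of M identified with x in R^{m+1} *)
Definition embA (R : realType) (d m : nat) (v : 'I_m.+1 -> 'rV[R]_d.+1)
  (x : 'rV[R]_m.+1) : 'rV[R]_d.+1 := \sum_(s < m.+1) x 0 s *: v s.

Definition pd (R : realType) (n d : nat) (F : 'rV[R]_n.+1 -> 'rV[R]_d.+1)
  (x : 'rV[R]_n.+1) (i : 'I_n.+1) : 'rV[R]_d.+1 :=
  'D_(delta_mx 0 i) F x.

Definition C1_on (R : realType) (n d : nat) (U : set 'rV[R]_n.+1)
  (F : 'rV[R]_n.+1 -> 'rV[R]_d.+1) : Prop :=
  (forall x, U x -> forall i : 'I_n.+1, derivable F x (delta_mx 0 i)) /\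
  (forall i : 'I_n.+1, {within U, continuous (fun x => pd F x i)}).

(* points of R^{p+2} are (x_0,...,x_p, r); r is the last coordinate ord_max *)
Definition rcoord (R : realType) (p : nat) (y : 'rV[R]_p.+2) : R := y 0 ord_max.

Definition reflect_r (R : realType) (p : nat) (y : 'rV[R]_p.+2) : 'rV[R]_p.+2 :=
  \row_(i < p.+2) (if i == ord_max then - y 0 i else y 0 i).

(* x_p = sum_{s<=p} y_s v_s viewed in R^{m+1} *)
Definition xp_embed (R : realType) (p m : nat) (y : 'rV[R]_p.+2) : 'rV[R]_m.+1 :=
  \row_(s < m.+1) (if (s <= p)%N then y 0 (inord s) else 0).

(* the sphere S of unit vectors in span(v_{p+1},...,v_m), in coordinates *)
Definition in_sphere (R : realType) (p m : nat) (w : 'rV[R]_m.+1) : Prop :=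
  (forall s : 'I_m.+1, (s <= p)%N -> w 0 s = 0) /\
  \sum_(s < m.+1) w 0 s ^+ 2 = 1.

Definition OmegaD (R : realType) (p m : nat) (D : set 'rV[R]_p.+2) :
  set 'rV[R]_m.+1 :=
  [set x | exists (y : 'rV[R]_p.+2) (w : 'rV[R]_m.+1),
     D y /\ 0 <= rcoord y /\ in_sphere p w /\
     x = xp_embed m y + rcoord y *: w].

Definition stem_function (R : realType) (p d : nat) (D : set 'rV[R]_p.+2)
  (F1 F2 : 'rV[R]_p.+2 -> 'rV[R]_d.+1) : Prop :=
  forall y, D y -> F1 (reflect_r y) = F1 y /\ F2 (reflect_r y) = - F2 y.

Definition induced_by (R : realType) (p m d : nat)
  (mul : 'rV[R]_d.+1 -> 'rV[R]_d.+1 -> 'rV[R]_d.+1)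
  (v : 'I_m.+1 -> 'rV[R]_d.+1) (D : set 'rV[R]_p.+2)
  (F1 F2 : 'rV[R]_p.+2 -> 'rV[R]_d.+1) (f : 'rV[R]_m.+1 -> 'rV[R]_d.+1) : Prop :=
  forall (y : 'rV[R]_p.+2) (w : 'rV[R]_m.+1), D y -> 0 <= rcoord y -> in_sphere p w ->
    f (xp_embed m y + rcoord y *: w) = F1 y + mul (embA v w) (F2 y).

Definition Dx (R : realType) (m d : nat)
  (mul : 'rV[R]_d.+1 -> 'rV[R]_d.+1 -> 'rV[R]_d.+1)
  (v : 'I_m.+1 -> 'rV[R]_d.+1) (f : 'rV[R]_m.+1 -> 'rV[R]_d.+1) x :=
  \sum_(s < m.+1) mul (v s) (pd f x s).

Definition Dxp (R : realType) (p m d : nat)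
  (mul : 'rV[R]_d.+1 -> 'rV[R]_d.+1 -> 'rV[R]_d.+1)
  (v : 'I_m.+1 -> 'rV[R]_d.+1) (F : 'rV[R]_p.+2 -> 'rV[R]_d.+1) y :=
  \sum_(0 <= s < p.+1) mul (v (inord s)) (pd F y (inord s)).

Definition Dxp_bar (R : realType) (p m d : nat)
  (mul : 'rV[R]_d.+1 -> 'rV[R]_d.+1 -> 'rV[R]_d.+1)
  (v : 'I_m.+1 -> 'rV[R]_d.+1) (F : 'rV[R]_p.+2 -> 'rV[R]_d.+1) y :=
  pd F y ord0 - \sum_(1 <= s < p.+1) mul (v (inord s)) (pd F y (inord s)).

(* Main.v *)
Require Import Defs.
From HB Require Import structures.
From mathcomp Require Import all_boot all_order all_algebra.
From mathcomp Require Import all_classical all_reals all_analysis.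
From mathcomp Require Import ring.
Import Order.TTheory GRing.Theory Num.Theory.
Import numFieldNormedType.Exports.
Local Open Scope classical_set_scope.
Local Open Scope ring_scope.

Set Implicit Arguments. Unset Strict Implicit.

Section Tools.
Variable R : realType.

Lemma is_derive_mx a b (g : R -> 'M[R]_(a, b)) x (dg : 'M[R]_(a, b)) :
  (forall i j, is_derive x (1:R) (fun t => g t i j) (dg i j)) -> is_derive x 1 g dg.
Proof.
move=> H.
have dv : derivable g x 1 by apply/derivable_mxP => i j; case: (H i j).
apply: DeriveDef => //; rewrite derive_mx //; apply/matrixP => i j; rewrite mxE.
by case: (H i j).
Qed.

Lemma mx_is_derive a b (g : R -> 'M[R]_(a, b)) x (dg : 'M[R]_(a, b)) :
  is_derive x (1:R) g dg -> forall i j, is_derive x (1:R) (fun t => g t i j) (dg i j).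
Proof.
move=> [dv <-] i j; have := dv => /derivable_mxP/(_ i j) dij.
apply: DeriveDef => //; by rewrite derive_mx // mxE.
Qed.

Lemma is_deriveZf n (c : R -> R) (u : R -> 'rV[R]_n) x dc du :
  is_derive x (1:R) c dc -> is_derive x (1:R) u du ->
  is_derive x (1:R) (fun t => c t *: u t) (dc *: u x + c x *: du).
Proof.
move=> hc hu; apply: is_derive_mx => i j.
have hij := mx_is_derive hu i j.
rewrite !mxE.
have -> : (fun t => (c t *: u t) i j) = c * (fun t => u t i j).
  by apply/funext => t; rewrite !mxE.
have := @is_deriveM R R c (fun t => u t i j) x 1 dc (du i j) hc hij.
move=> [d1 d2]; apply: DeriveDef => //; rewrite d2.
by rewrite addrC; congr (_ + _); rewrite /GRing.scale /= mulrC.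
Qed.

End Tools.
Section Tools2.
Variable R : realType.

Lemma derive1P_eq n k (F : 'rV[R]_n -> 'rV[R]_k) y e :
  'D_e F y = 'D_1 (fun h : R => F (h *: e + y)) 0.
Proof.
rewrite /derive; set g1 := fun h => h^-1 *: _; set g2 := fun h => h^-1 *: _.
suff -> : g1 = g2 by [].
by rewrite funeqE /g1 /g2 => h /=; rewrite addr0 scale0r add0r [_%:A]mulr1.
Qed.

Lemma is_derive_line n k (F : 'rV[R]_n -> 'rV[R]_k) y e dF :
  is_derive (0:R) (1:R) (fun h : R => F (h *: e + y)) dF -> is_derive y e F dF.
Proof.
move=> [d1 d2]; apply: DeriveDef; first exact/derivable1P.
by rewrite derive1P_eq.
Qed.

Lemma line_is_derive n k (F : 'rV[R]_n -> 'rV[R]_k) y e :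
  derivable F y e -> is_derive (0:R) (1:R) (fun h : R => F (h *: e + y)) ('D_e F y).
Proof.
move=> d; apply: DeriveDef; first exact: (proj1 (derivable1P F y e) d).
by rewrite derive1P_eq.
Qed.


Lemma lin_expand n k (L : 'rV[R]_n -> 'rV[R]_k)
  (HL : forall (c:R) a b, L (c *: a + b) = c *: L a + L b) u :
  L u = \sum_(i < n) u 0 i *: L (delta_mx 0 i).
Proof.
have L0 : L 0 = 0.
  have h := HL 1 0 0; rewrite scaler0 addr0 scale1r in h.
  by apply: (@addrI _ (L 0)); rewrite addr0 -h.
have LD : forall a b, L (a + b) = L a + L b.
  by move=> a b; have h := HL 1 a b; rewrite !scale1r in h; exact: h.
have LZ : forall (c : R) a, L (c *: a) = c *: L a.
  by move=> c a; have h := HL c a 0; rewrite addr0 L0 addr0 in h; exact: h.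
rewrite {1}(row_sum_delta u) (big_morph L LD L0); apply: eq_bigr => i _; exact: LZ.
Qed.

Lemma is_derive_lin n k (L : 'rV[R]_n -> 'rV[R]_k)
  (HL : forall (c:R) a b, L (c *: a + b) = c *: L a + L b) (u : R -> 'rV[R]_n) x du :
  is_derive x (1:R) u du -> is_derive x (1:R) (fun t => L (u t)) (L du).
Proof.
move=> hu.
have -> : (fun t => L (u t)) = \sum_(i < n) (fun t => u t 0 i *: L (delta_mx 0 i)).
  by rewrite fct_sumE; apply/funext => t; exact: lin_expand.
rewrite (lin_expand HL du); apply: is_derive_sum => i.
have := @is_deriveZf R _ (fun t => u t 0 i) (cst (L (delta_mx 0 i))) x (du 0 i) 0
  (mx_is_derive hu 0 i) (is_derive_cst _ _ _).
by move/is_derive_eq; apply; rewrite scaler0 addr0.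
Qed.

Lemma is_derive_chain n (G : R -> 'rV[R]_n) (rho : R -> R) x dG drho :
  is_derive (rho x) (1:R) G dG -> is_derive x (1:R) rho drho ->
  is_derive x (1:R) (fun t => G (rho t)) (drho *: dG).
Proof.
move=> hG hr; apply: is_derive_mx => i j.
have := @is_derive1_comp R (fun s => G s i j) rho x (dG i j) drho (mx_is_derive hG i j) hr.
by move/is_derive_eq; apply; rewrite mxE mulrC.
Qed.

Lemma is_derive_bilin n k (B : 'rV[R]_n -> 'rV[R]_n -> 'rV[R]_k)
  (HBl : forall (c:R) a b z, B (c *: a + b) z = c *: B a z + B b z)
  (HBr : forall (c:R) a b z, B z (c *: a + b) = c *: B z a + B z b)
  (a b : R -> 'rV[R]_n) x da db :
  is_derive x (1:R) a da -> is_derive x (1:R) b db ->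
  is_derive x (1:R) (fun t => B (a t) (b t)) (B da (b x) + B (a x) db).
Proof.
move=> ha hb.
have -> : (fun t => B (a t) (b t)) =
   \sum_(i < n) (fun t => a t 0 i *: B (delta_mx 0 i) (b t)).
  rewrite fct_sumE; apply/funext => t.
  exact: (@lin_expand _ _ (fun z => B z (b t))).
rewrite (@lin_expand _ _ (fun z => B z (b x)) (fun c a1 b1 => HBl c a1 b1 (b x)) da).
rewrite (@lin_expand _ _ (fun z => B z db) (fun c a1 b1 => HBl c a1 b1 db) (a x)).
rewrite -big_split /=; apply: is_derive_sum => i.
have := @is_deriveZf R _ (fun t => a t 0 i) (fun t => B (delta_mx 0 i) (b t)) x (da 0 i)
  (B (delta_mx 0 i) db) (mx_is_derive ha 0 i)
  (@is_derive_lin _ _ (B (delta_mx 0 i)) (fun c a1 b1 => HBr c a1 b1 (delta_mx 0 i)) _ _ _ hb).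
by [].
Qed.

End Tools2.

Section Alg.
Variables (R : realType) (d : nat).
Local Notation V := 'rV[R]_d.+1.
Variables (mul : V -> V -> V) (one : V) (conj : V -> V).
Hypothesis Halg : alt_algebra_anti_inv mul one conj.

Lemma mulLin k a b c : mul (k *: a + b) c = k *: mul a c + mul b c.
Proof. by case: Halg => H _; apply: H. Qed.
Lemma mulRin k a b c : mul c (k *: a + b) = k *: mul c a + mul c b.
Proof. by case: Halg => _ [H _]; apply: H. Qed.

Lemma m0l a : mul 0 a = 0.
Proof.
have h := mulLin 1 0 0 a; rewrite scaler0 addr0 scale1r in h.
by apply: (@addrI _ (mul 0 a)); rewrite addr0 -h.
Qed.
Lemma m0r a : mul a 0 = 0.
Proof.
have h := mulRin 1 0 0 a; rewrite scaler0 addr0 scale1r in h.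
by apply: (@addrI _ (mul a 0)); rewrite addr0 -h.
Qed.
Lemma mDl a b c : mul (a + b) c = mul a c + mul b c.
Proof. by have h := mulLin 1 a b c; rewrite !scale1r in h. Qed.
Lemma mDr a b c : mul c (a + b) = mul c a + mul c b.
Proof. by have h := mulRin 1 a b c; rewrite !scale1r in h. Qed.
Lemma mZl k a c : mul (k *: a) c = k *: mul a c.
Proof. by have h := mulLin k a 0 c; rewrite addr0 m0l addr0 in h. Qed.
Lemma mZr k a c : mul c (k *: a) = k *: mul c a.
Proof. by have h := mulRin k a 0 c; rewrite addr0 m0r addr0 in h. Qed.
Lemma mNl a c : mul (- a) c = - mul a c.
Proof. by rewrite -scaleN1r mZl scaleN1r. Qed.
Lemma mNr a c : mul c (- a) = - mul c a.
Proof. by rewrite -scaleN1r mZr scaleN1r. Qed.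
Lemma mBl a b c : mul (a - b) c = mul a c - mul b c.
Proof. by rewrite mDl mNl. Qed.
Lemma mBr a b c : mul c (a - b) = mul c a - mul c b.
Proof. by rewrite mDr mNr. Qed.
Lemma m_suml (I : Type) (r : seq I) (P : pred I) (F : I -> V) c :
  mul (\sum_(i <- r | P i) F i) c = \sum_(i <- r | P i) mul (F i) c.
Proof. exact: (big_morph (fun a => mul a c) (fun a b => mDl a b c) (m0l c)). Qed.
Lemma m_sumr (I : Type) (r : seq I) (P : pred I) (F : I -> V) c :
  mul c (\sum_(i <- r | P i) F i) = \sum_(i <- r | P i) mul c (F i).
Proof. exact: (big_morph (fun a => mul c a) (fun a b => mDr a b c) (m0r c)). Qed.
Lemma m1l a : mul one a = a.
Proof. by case: Halg => _ [_ [H _]]; case: (H a). Qed.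
Lemma mN1l a : mul (- one) a = - a.
Proof. by rewrite mNl m1l. Qed.
Lemma alt a b : mul (mul a a) b = mul a (mul a b).
Proof.
case: Halg => _ [_ [_ [H _]]]; case: (H a b) => h _.
by apply/eqP; rewrite -subr_eq0; apply/eqP; exact: h.
Qed.
Lemma alt_lin a b c :
  mul (mul a b) c + mul (mul b a) c = mul a (mul b c) + mul b (mul a c).
Proof.
have h := alt (a + b) c.
rewrite !mDl !mDr !mDl !alt in h.
by move: h; rewrite -!addrA => /addrI; rewrite !addrA => /addIr.
Qed.


Lemma double_inj (a b : V) : a + a = b + b -> a = b.
Proof.
move=> h; have h2 : (2:R) *: a = (2:R) *: b by rewrite !scaler_nat !mulr2n.
by apply: (scalerI _ h2); rewrite pnatr_eq0.
Qed.

Variables (m p : nat) (v : 'I_m.+1 -> V).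
Hypothesis Hb : admissible_basis mul one conj v.

Lemma v0 : v ord0 = one.
Proof. by case: Hb. Qed.

Lemma vsq s : s != ord0 -> mul (v s) (v s) = - one.
Proof.
case: Hb => _ [H _] /H [ht hn].
have hc : conj (v s) = - v s.
  by apply/eqP; rewrite -addr_eq0 addrC; apply/eqP; exact: ht.
by move: hn; rewrite /nA hc mNr => <-; rewrite opprK.
Qed.

Lemma vanti s t : s != ord0 -> t != ord0 -> s != t ->
  mul (v s) (v t) = - mul (v t) (v s).
Proof. by case: Hb => _ [_ [H _]]; apply: H. Qed.

Variable w : 'rV[R]_m.+1.
Hypothesis Hw : in_sphere p w.

Lemma w_nz s : w 0 s != 0 -> s != ord0 /\ ~~ (s <= p)%N.
Proof.
case: Hw => H _ ws; have np : ~~ (s <= p)%N.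
  by apply/negP => /H; apply/eqP.
split => //; apply/eqP => s0; move: np; rewrite s0.
by [].
Qed.

Local Notation om := (embA v w).

Lemma omega_sq : mul om om = - one.
Proof.
pose X s t := (w 0 s * w 0 t) *: mul (v s) (v t).
have eS : mul om om = \sum_(s < m.+1) \sum_(t < m.+1) X s t.
  rewrite /embA m_suml; apply: eq_bigr => s _; rewrite mZl m_sumr scaler_sumr.
  by apply: eq_bigr => t _; rewrite mZr scalerA.
have Y0 : forall s t, s != t -> X s t + X t s = 0.
  move=> s t st; rewrite /X.
  have [ws0|ws] := eqVneq (w 0 s) 0; first by rewrite ws0 mul0r mulr0 !scale0r addr0.
  have [wt0|wt] := eqVneq (w 0 t) 0; first by rewrite wt0 mul0r mulr0 !scale0r addr0.
  have [s0 _] := w_nz ws; have [t0 _] := w_nz wt.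
  by rewrite (vanti s0 t0 st) scalerN mulrC addNr.
apply: double_inj; rewrite {1}eS.
have -> : \sum_(s < m.+1) \sum_(t < m.+1) X s t = \sum_(s < m.+1) \sum_(t < m.+1) X t s.
  by rewrite exchange_big.
rewrite eS -big_split /=.
rewrite (eq_bigr (fun s => X s s + X s s)); last first.
  move=> s _; rewrite -big_split (bigD1 s) //= big1 ?addr0 //.
  by move=> t ts; rewrite Y0 // eq_sym.
rewrite big_split /= /X.
suff -> : \sum_(s < m.+1) (w 0 s * w 0 s) *: mul (v s) (v s) = - one by [].
rewrite (eq_bigr (fun s => (w 0 s ^+ 2) *: - one)); last first.
  move=> s _; have [ws0|ws] := eqVneq (w 0 s) 0; first by rewrite ws0 mul0r expr0n /= !scale0r.
  by have [s0 _] := w_nz ws; rewrite vsq // expr2.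
by rewrite -scaler_suml; case: Hw => _ ->; rewrite scale1r.
Qed.


Lemma omega_omega a : mul om (mul om a) = - a.
Proof. by rewrite -alt omega_sq mN1l. Qed.

Lemma anticomm s : s != ord0 -> (s <= p)%N -> mul (v s) om = - mul om (v s).
Proof.
move=> s0 sp; rewrite /embA m_sumr m_suml -sumrN; apply: eq_bigr => t _.
rewrite mZr mZl.
have [wt0|wt] := eqVneq (w 0 t) 0; first by rewrite wt0 !scale0r oppr0.
have [t0 tp] := w_nz wt.
have st : s != t by apply/eqP => est; move: tp; rewrite -est sp.
by rewrite vanti // scalerN.
Qed.

Lemma vs_omega s a : s != ord0 -> (s <= p)%N ->
  mul (v s) (mul om a) = - mul om (mul (v s) a).
Proof.
move=> s0 sp; have h := alt_lin (v s) om a.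
rewrite anticomm // mNl addNr in h.
by apply/eqP; rewrite -addr_eq0 -h.
Qed.

End Alg.

Lemma embA_lin (R : realType) (d m : nat) (v : 'I_m.+1 -> 'rV[R]_d.+1) (k : R) a b :
  embA v (k *: a + b) = k *: embA v a + embA v b.
Proof.
rewrite /embA scaler_sumr -big_split; apply: eq_bigr => s _.
by rewrite !mxE scalerDl scalerA.
Qed.

Lemma embA_delta (R : realType) (d m : nat) (v : 'I_m.+1 -> 'rV[R]_d.+1) j :
  embA v (delta_mx 0 j) = v j.
Proof.
rewrite /embA (bigD1 j) //= big1 ?addr0; first by rewrite mxE !eqxx scale1r.
by move=> s sj; rewrite mxE eqxx /= (negbTE sj) scale0r.

Qed.

Lemma embAZ (R : realType) (d m : nat) (v : 'I_m.+1 -> 'rV[R]_d.+1) (k : R) a :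
  embA v (k *: a) = k *: embA v a.
Proof.
by rewrite /embA scaler_sumr; apply: eq_bigr => s _; rewrite mxE scalerA.
Qed.

Lemma embAN (R : realType) (d m : nat) (v : 'I_m.+1 -> 'rV[R]_d.+1) a :
  embA v (- a) = - embA v a.
Proof.
by rewrite /embA -sumrN; apply: eq_bigr => s _; rewrite mxE scaleNr.
Qed.


Section Geo.
Variables (R : realType) (p m : nat).

Lemma inord_neq_max s : (s <= p)%N -> (inord s : 'I_p.+2) != ord_max.
Proof.
move=> sp; apply/eqP => /(congr1 val) /=; rewrite inordK; last by rewrite ltnS ltnW.
by move=> e; move: sp; rewrite e ltnn.
Qed.

Lemma rcoord_r h (y : 'rV[R]_p.+2) : rcoord (h *: delta_mx 0 ord_max + y) = h + rcoord y.
Proof. by rewrite /rcoord !mxE !eqxx mulr1. Qed.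

Lemma xp_r h (y : 'rV[R]_p.+2) : xp_embed m (h *: delta_mx 0 ord_max + y) = xp_embed m y.
Proof.
apply/matrixP => i s; rewrite !mxE; case: ifP => // sp.
by rewrite eqxx (negbTE (inord_neq_max sp)) /= mulr0 add0r.
Qed.

Lemma rcoord_j h (y : 'rV[R]_p.+2) (j : 'I_m.+1) : (j <= p)%N ->
  rcoord (h *: delta_mx 0 (inord j) + y) = rcoord y.
Proof.
move=> jp; rewrite /rcoord !mxE eqxx eq_sym (negbTE (inord_neq_max jp)) /= mulr0 add0r.
by [].
Qed.

Lemma xp_j h (y : 'rV[R]_p.+2) (j : 'I_m.+1) : (j <= p)%N ->
  xp_embed m (h *: delta_mx 0 (inord j) + y) = h *: delta_mx 0 j + xp_embed m y.
Proof.
move=> jp; apply/matrixP => i s; rewrite (ord1 i) !mxE eqxx /=; case: ifP => sp.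
  suff -> : (inord s == inord j :> 'I_p.+2) = (s == j) by [].
  apply/idP/idP => /eqP e; apply/eqP; last by rewrite e.
  apply: val_inj; move/(congr1 val): e => /=.
  by rewrite !inordK // ltnS ?(leq_trans sp) ?(leq_trans jp).
by case: eqP => [e|_]; [move: sp; rewrite e jp | rewrite mulr0 addr0].
Qed.

Lemma xp_reflect (y : 'rV[R]_p.+2) : xp_embed m (reflect_r y) = xp_embed m y.
Proof.
apply/matrixP => i s; rewrite !mxE; case: ifP => // sp.
by rewrite (negbTE (inord_neq_max sp)).
Qed.

Lemma rcoord_reflect (y : 'rV[R]_p.+2) : rcoord (reflect_r y) = - rcoord y.
Proof. by rewrite /rcoord mxE eqxx. Qed.

Lemma sphereN (w : 'rV[R]_m.+1) : in_sphere p w -> in_sphere p (- w).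
Proof.
case=> h1 h2; split; first by move=> s sp; rewrite mxE h1 // oppr0.
by rewrite -h2; apply: eq_bigr => s _; rewrite mxE sqrrN.
Qed.

Lemma sphere_max : (p < m)%N -> in_sphere p (delta_mx 0 ord_max : 'rV[R]_m.+1).
Proof.
move=> pm; split.
  move=> s sp; rewrite mxE eqxx /=; case: eqP => // e.
  by move: sp; rewrite e /= leqNgt pm.
rewrite (bigD1 ord_max) //= big1 ?addr0; first by rewrite mxE !eqxx expr1n.
by move=> s sm; rewrite mxE eqxx /= (negbTE sm) expr0n.
Qed.

End Geo.

Section Scal.
Variable R : realType.

Lemma sc_mull (g : R -> R) x dg k :
  is_derive x (1:R) g dg -> is_derive x (1:R) (fun h => k * g h) (k * dg).
Proof. by move=> hg; have := is_deriveZ k hg. Qed.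

Lemma sc_subc (g : R -> R) x dg k :
  is_derive x (1:R) g dg -> is_derive x (1:R) (fun h => g h - k) dg.
Proof.
move=> hg; have := is_deriveB hg (is_derive_cst k x 1).
by move/is_derive_eq; apply; rewrite subr0.
Qed.

Lemma sc_sq (g : R -> R) x dg :
  is_derive x (1:R) g dg -> is_derive x (1:R) (fun h => g h ^+ 2) (2 * g x * dg).
Proof.
move=> hg; have := is_deriveX 2 hg.
by move/is_derive_eq; apply; rewrite expr1.
Qed.

Lemma near_open (W : normedModType R) (A : set W) (g : R -> W) x dg :
  open A -> A (g x) -> is_derive x (1:R) g dg -> \forall h \near x, A (g h).
Proof.
move=> oA Ag [dv _].
have cg : {for x, continuous g}.
  by apply: differentiable_continuous; apply/derivable1_diffP.
have nA : nbhs (g x) A by move: oA; rewrite openE => /(_ _ Ag).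
exact: cg nA.
Qed.

Lemma line_deriv n (e y : 'rV[R]_n) : is_derive (0:R) (1:R) (fun h : R => h *: e + y) e.
Proof.
have := is_deriveD (@is_deriveZf R _ id (cst e) (0:R) (1:R) (0:'rV[R]_n) (is_derive_id _ _) (is_derive_cst _ _ _))
  (is_derive_cst y (0:R) (1:R)).
by move/is_derive_eq; apply; rewrite scale1r scaler0 !addr0.
Qed.

End Scal.

Section Sums.
Variables (V : zmodType) (m p : nat).
Hypothesis hpm : (p < m)%N.

Lemma sum_low (H : nat -> V) :
  \sum_(s < m.+1 | (s <= p)%N) H s = \sum_(0 <= s < p.+1) H s.
Proof.
have pm : (p.+1 <= m.+1)%N by rewrite ltnS ltnW.
rewrite (big_nat_widen 0 p.+1 m.+1 _ _ pm) big_mkord.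
by apply: eq_bigl => s /=; rewrite ltnS.
Qed.

Lemma sum_high (H : nat -> V) :
  \sum_(s < m.+1 | ~~ (s <= p)%N) H s = \sum_(p.+1 <= s < m.+1) H s.
Proof.
rewrite -(big_mkord (fun s => ~~ (s <= p)%N) H).
have pm : (p.+1 <= m.+1)%N by rewrite ltnS ltnW.
rewrite (@big_cat_nat _ _ _ p.+1 0 m.+1 _ _ (leq0n _) pm) /=.
rewrite big_nat_cond big1 ?add0r; last first.
  by move=> s /andP[/andP[_ sp]]; rewrite ltnS in sp; rewrite sp.
rewrite big_nat_cond [RHS]big_nat_cond; apply: eq_bigl => s.
by rewrite -ltnNge; case: (p < s)%N; case: (s < m.+1)%N.
Qed.

End Sums.

Section Main.
Variables (R : realType) (d : nat).
Local Notation V := 'rV[R]_d.+1.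
Variables (mul : V -> V -> V) (one : V) (conj : V -> V) (m p : nat)
  (v : 'I_m.+1 -> V) (D : set 'rV[R]_p.+2) (F1 F2 : 'rV[R]_p.+2 -> V)
  (f : 'rV[R]_m.+1 -> V).
Hypotheses (Halg : alt_algebra_anti_inv mul one conj) (hpm : (p < m)%N)
  (Hb : admissible_basis mul one conj v) (Dopen : open D)
  (Drefl : forall y, D y -> D (reflect_r y)) (Hstem : stem_function D F1 F2)
  (HC1 : C1_on D F1) (HC2 : C1_on D F2) (Hind : induced_by mul v D F1 F2 f).

Lemma induced_ext y w : D y -> in_sphere p w ->
  f (xp_embed m y + rcoord y *: w) = F1 y + mul (embA v w) (F2 y).
Proof.
move=> Dy Hw; have [r0|r0] := leP 0 (rcoord y); first exact: Hind.
have Dr := Drefl Dy.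
have := Hind Dr _ (sphereN Hw).
rewrite xp_reflect rcoord_reflect scaleNr scalerN opprK => ->; last by rewrite oppr_ge0 ltW.
case: (Hstem Dy) => -> ->.
by rewrite embAN (mNl Halg) (mNr Halg) opprK.
Qed.

Lemma inOmega y w : D y -> in_sphere p w -> @OmegaD R p m D (xp_embed m y + rcoord y *: w).
Proof.
move=> Dy Hw; have [r0|r0] := leP 0 (rcoord y); first by exists y, w.
exists (reflect_r y), (- w); split; first exact: Drefl.
rewrite rcoord_reflect oppr_ge0 ltW //; split => //; split; first exact: sphereN.
by rewrite xp_reflect scaleNr scalerN opprK.
Qed.

Lemma pd_low y w (j : 'I_m.+1) : D y -> in_sphere p w -> (j <= p)%N ->
  is_derive (xp_embed m y + rcoord y *: w) (delta_mx 0 j) f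
    (pd F1 y (inord j) + mul (embA v w) (pd F2 y (inord j))).
Proof.
move=> Dy Hw jp; apply: is_derive_line.
set e' := delta_mx 0 (inord j) : 'rV[R]_p.+2.
have h1 := line_is_derive (HC1.1 y Dy (inord j)).
have h2 := line_is_derive (HC2.1 y Dy (inord j)).
have h2' := @is_derive_lin _ _ _ (mul (embA v w)) (fun k a b => mulRin Halg k a b (embA v w)) _ _ _ h2.
have hg := is_deriveD h1 h2'.
apply: near_eq_is_derive hg.
have nD : \forall h \near (0:R), D (h *: e' + y).
  by apply: (near_open Dopen _ (line_deriv e' y)); rewrite scale0r add0r.
near=> h.
have Dh : D (h *: e' + y) by near: h.
rewrite -[X in X = _]/(F1 (h *: e' + y) + mul (embA v w) (F2 (h *: e' + y))).
by rewrite -induced_ext // xp_j // rcoord_j // addrA.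
Unshelve. all: by end_near.
Qed.

Lemma pd_high y w (j : 'I_m.+1) : D y -> in_sphere p w -> ~~ (j <= p)%N ->
  rcoord y != 0 ->
  is_derive (xp_embed m y + rcoord y *: w) (delta_mx 0 j) f
   (w 0 j *: pd F1 y ord_max +
    (mul (embA v ((rcoord y)^-1 *: delta_mx 0 j - (w 0 j / rcoord y) *: w)) (F2 y)
     + mul (embA v w) (w 0 j *: pd F2 y ord_max))).
Proof.
move=> Dy Hw jp r0; apply: is_derive_line.
set r := rcoord y; set ej := (delta_mx 0 j : 'rV[R]_m.+1).
set er := (delta_mx 0 ord_max : 'rV[R]_p.+2).
pose u := fun h : R => h *: (r^-1 *: ej) + w.
have hu : is_derive (0:R) (1:R) u (r^-1 *: ej) by apply: line_deriv.
have u0 : u 0 = w by rewrite /u scale0r add0r.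
pose S := fun h : R => \sum_(s < m.+1) (u h 0 s) ^+ 2.
have hS : is_derive (0:R) (1:R) S (2 * w 0 j * r^-1).
  have -> : S = \sum_(s < m.+1) (fun h => (u h 0 s) ^+ 2).
    by rewrite fct_sumE.
  apply: is_derive_eq; first by apply: is_derive_sum => s; apply: sc_sq; exact: mx_is_derive hu 0 s.
  rewrite (bigD1 j) //= big1 ?addr0.
    by rewrite u0 !mxE !eqxx mulr1.
  by move=> s sj; rewrite !mxE eqxx /= (negbTE sj) !mulr0.
have S0 : S 0 = 1 by rewrite /S u0; case: Hw.
pose N := fun h : R => Num.sqrt (S h).
have N0 : N 0 = 1 by rewrite /N S0 sqrtr1.
have hN : is_derive (0:R) (1:R) N (w 0 j * r^-1).
  have hsq : is_derive (S 0) (1:R) Num.sqrt (2 * Num.sqrt (S 0))^-1.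
    by apply: is_derive1_sqrt; rewrite S0 ltr01.
  have := is_derive1_comp hsq hS; move/is_derive_eq; apply.
  by rewrite S0 sqrtr1 mulr1 !mulrA mulVf ?mul1r // pnatr_eq0.
have Nn0 : N 0 != 0 by rewrite N0 oner_neq0.
have hNi := @is_deriveV R N 0 _ 1 Nn0 hN.
have hW := @is_deriveZf R _ (fun h => (N h)^-1) u 0 _ _ hNi hu.
have hE := @is_derive_lin _ _ _ (embA v) (fun k a b => embA_lin v k a b) _ _ _ hW.
pose rho := fun h : R => r * N h - r.
have hrho : is_derive (0:R) (1:R) rho (r * (w 0 j / r)).
  exact: sc_subc (sc_mull _ hN).
have rho0 : rho 0 = 0 by rewrite /rho N0 mulr1 subrr.
have hG1 : is_derive (rho 0) (1:R) (fun h : R => F1 (h *: er + y)) (pd F1 y ord_max).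
  rewrite rho0; exact: line_is_derive (HC1.1 y Dy ord_max).
have hG2 : is_derive (rho 0) (1:R) (fun h : R => F2 (h *: er + y)) (pd F2 y ord_max).
  rewrite rho0; exact: line_is_derive (HC2.1 y Dy ord_max).
have hC1 := is_derive_chain hG1 hrho.
have hC2 := is_derive_chain hG2 hrho.
have hbil := is_derive_bilin (mulLin Halg) (mulRin Halg) hE hC2.
have hsum := is_deriveD hC1 hbil.
have hY : is_derive (rho 0) (1:R) (fun h : R => h *: er + y) er.
  rewrite rho0; exact: line_deriv.
have hY' := is_derive_chain hY hrho.
have nD : \forall h \near (0:R), D (rho h *: er + y).
  by apply: (near_open Dopen _ hY'); rewrite rho0 scale0r add0r.
have nN : \forall h \near (0:R), 0 < N h.
  by apply: (near_open (@open_gt _ 0) _ hN); rewrite /= N0 ltr01.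
apply: is_derive_eq; first apply: near_eq_is_derive hsum.
  near=> h.
  have Dh : D (rho h *: er + y) by near: h.
  have Nh : 0 < N h by near: h.
  have Nn : N h != 0 by rewrite gt_eqF.
  have HW : in_sphere p ((N h)^-1 *: u h).
    split.
      move=> s sp; rewrite !mxE eqxx /=.
      have -> : (s == j) = false by apply/negP => /eqP e; move: jp; rewrite -e sp.
      by case: Hw => -> //; rewrite !mulr0 add0r mulr0.
    have Sge : 0 <= S h by apply: sumr_ge0 => s _; exact: sqr_ge0.
    rewrite (eq_bigr (fun t => (N h)^-2 * (u h 0 t ^+ 2))); last first.
      by move=> t _; rewrite mxE exprMn exprVn.
    by rewrite -mulr_sumr -/(S h) -(sqr_sqrtr Sge) -/(N h) mulVf // expf_neq0.
  rewrite -[X in X = _]/(F1 (rho h *: er + y) + mul (embA v ((N h)^-1 *: u h)) (F2 (rho h *: er + y))).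
  rewrite -induced_ext // xp_r rcoord_r; congr f.
  rewrite /rho subrK scalerA (mulfK Nn) /u scalerDr !scalerA mulrAC divff // mul1r.
  by rewrite addrA (addrC (xp_embed m y)) addrA.
rewrite N0 u0 rho0 scale0r add0r invr1 !scale1r expr1n invr1.
have e1 : r * (w 0 j / r) = w 0 j by rewrite mulrCA divff // mulr1.
rewrite e1 scaleN1r.
by rewrite (addrC (_ *: w)) scaleNr.
Unshelve. all: by end_near.
Qed.

Lemma Dx_formula y w : D y -> in_sphere p w -> rcoord y != 0 ->
  Dx mul v f (xp_embed m y + rcoord y *: w) =
  (Dxp mul v F1 y - pd F2 y ord_max - (((m - p)%:R - 1) / rcoord y) *: F2 y)
  + mul (embA v w) (Dxp_bar mul v F2 y + pd F1 y ord_max).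
Proof.
move=> Dy Hw r0.
set r := rcoord y; set om := embA v w.
have Hpd : forall s : 'I_m.+1, pd f (xp_embed m y + r *: w) s =
   if (s <= p)%N then pd F1 y (inord s) + mul om (pd F2 y (inord s))
   else w 0 s *: pd F1 y ord_max +
    (mul (embA v (r^-1 *: delta_mx 0 s - (w 0 s / r) *: w)) (F2 y)
     + mul om (w 0 s *: pd F2 y ord_max)).
  move=> s; case: ifP => sp.
    by case: (pd_low Dy Hw sp).
  by case: (pd_high Dy Hw (negbT sp) r0).
rewrite /Dx (bigID (fun s : 'I_m.+1 => (s <= p)%N)) /=.
rewrite (eq_bigr (fun s : 'I_m.+1 => mul (v (inord s)) (pd F1 y (inord s) + mul om (pd F2 y (inord s))))); last first.
  by move=> s sp; rewrite Hpd sp inord_val.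
rewrite (sum_low hpm (fun s => mul (v (inord s)) (pd F1 y (inord s) + mul om (pd F2 y (inord s))))).
have i0m : (inord 0 : 'I_m.+1) = ord0 by apply: val_inj; rewrite /= inordK.
have i0p : (inord 0 : 'I_p.+2) = ord0 by apply: val_inj; rewrite /= inordK.
have Low : \sum_(0 <= s < p.+1) mul (v (inord s)) (pd F1 y (inord s) + mul om (pd F2 y (inord s)))
    = Dxp mul v F1 y + mul om (Dxp_bar mul v F2 y).
  rewrite (eq_bigr _ (fun s _ => mDr Halg _ _ _)) big_split /=; congr (_ + _).
  rewrite /Dxp_bar big_ltn // i0m i0p (v0 Hb) (m1l Halg) (mBr Halg); congr (_ + _).
  rewrite (m_sumr Halg) -sumrN; apply: eq_big_nat => s /andP[s1 sp].
  have sm : (s < m.+1)%N by rewrite ltnS (leq_trans _ (ltnW hpm)) // -ltnS.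
  apply: (vs_omega Halg Hb Hw).
    by apply/eqP => /(congr1 val); rewrite /= inordK //; move=> e; move: s1; rewrite e.
  by rewrite inordK // -ltnS.
rewrite Low.
have sum_w : forall G : 'I_m.+1 -> V,
    \sum_(i < m.+1 | ~~ (i <= p)%N) w 0 i *: G i = \sum_(i < m.+1) w 0 i *: G i.
  move=> G; rewrite [RHS](bigID (fun i : 'I_m.+1 => (i <= p)%N)) /= [X in _ = X + _]big1 ?add0r //.
  by move=> i ip; case: Hw => -> // _; rewrite scale0r.
have sum_om : forall X, \sum_(i < m.+1) w 0 i *: mul (v i) X = mul om X.
  by move=> X; rewrite /om /embA (m_suml Halg); apply: eq_bigr => i _; rewrite (mZl Halg).
have High : \sum_(i < m.+1 | ~~ (i <= p)%N) mul (v i) (pd f (xp_embed m y + r *: w) i)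
   = mul om (pd F1 y ord_max) - pd F2 y ord_max + (r^-1 * (1 - (m - p)%:R)) *: F2 y.
  rewrite (eq_bigr (fun i => w 0 i *: mul (v i) (pd F1 y ord_max)
     + w 0 i *: mul (v i) (mul om (pd F2 y ord_max))
     - (r^-1 *: F2 y + r^-1 *: (w 0 i *: mul (v i) (mul om (F2 y)))))); last first.
    move=> i ip; rewrite Hpd (negbTE ip).
    have i0 : i != ord0 by apply/eqP => e; move: ip; rewrite e.
    rewrite embA_lin embAN embAZ embA_delta -/om.
    rewrite !(mDl Halg) !(mNl Halg) !(mZl Halg) !(mDr Halg) !(mNr Halg) !(mZr Halg).
    rewrite -(alt Halg) (vsq Halg Hb i0) (mN1l Halg).
    apply/rowP => k; rewrite !mxE; ring.
  rewrite sumrB big_split /= big_split /= !sum_w !sum_om.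
  have csum := sum_high hpm (fun _ => r^-1 *: F2 y); rewrite /= in csum.
  have e2 : \sum_(i < m.+1 | ~~ (i <= p)%N) r^-1 *: (w 0 i *: mul (v i) (mul om (F2 y)))
     = r^-1 *: mul om (mul om (F2 y)) by rewrite -scaler_sumr sum_w sum_om.
  rewrite e2 csum sumr_const_nat subSS -scaler_nat.
  rewrite !(omega_omega Halg Hb Hw).
  apply/rowP => k; rewrite !mxE; ring.
rewrite High (mDr Halg).
apply/rowP => k; rewrite !mxE; ring.
Qed.

End Main.
Section Cont.
Variable R : realType.

Lemma sum_cvg n k T (F : set_system T) (FF : Filter F) (g : 'I_n -> T -> 'rV[R]_k) (a : 'I_n -> 'rV[R]_k) :
  (forall i, g i @ F --> a i) ->
  (fun z => \sum_(i < n) g i z) @ F --> \sum_(i < n) a i.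
Proof.
move=> H; apply: cvg_big => //.
exact: add_continuous.
Qed.

Lemma lin_cvg n k (L : 'rV[R]_n -> 'rV[R]_k)
  (HL : forall (c:R) a b, L (c *: a + b) = c *: L a + L b) T (F : set_system T)
  (FF : Filter F) (g : T -> 'rV[R]_n) a :
  g @ F --> a -> (fun z => L (g z)) @ F --> L a.
Proof.
move=> hg; rewrite (lin_expand HL a).
have -> : (fun z => L (g z)) = (fun z => \sum_(i < n) g z 0 i *: L (delta_mx 0 i)).
  by apply/funext => z; exact: lin_expand.
apply: sum_cvg => i; apply: cvgZ; last exact: cvg_cst.
exact: (continuous_cvg _ (@coord_continuous R _ _ 0 i (a)) hg).
Qed.

Lemma Dx_cvg d m (mul : 'rV[R]_d.+1 -> 'rV[R]_d.+1 -> 'rV[R]_d.+1) one conj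
  (Halg : alt_algebra_anti_inv mul one conj) (v : 'I_m.+1 -> 'rV[R]_d.+1)
  (f : 'rV[R]_m.+1 -> 'rV[R]_d.+1) (A : set 'rV[R]_m.+1) (HCf : C1_on A f) x :
  A x -> (fun z => Dx mul v f z) @ within A (nbhs x) --> Dx mul v f x.
Proof.
move=> Ax; rewrite /Dx; apply: sum_cvg => i.
apply: (lin_cvg (fun k a b => mulRin Halg k a b (v i))).
have := HCf.2 i; move/subspace_continuousP; apply; exact: Ax.
Qed.

End Cont.

Unset Implicit Arguments.

Theorem lemma4p8 (R : realType) (d : nat)
  (mul : 'rV[R]_d.+1 -> 'rV[R]_d.+1 -> 'rV[R]_d.+1) (one : 'rV[R]_d.+1)
  (conj : 'rV[R]_d.+1 -> 'rV[R]_d.+1)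
  (m p : nat) (v : 'I_m.+1 -> 'rV[R]_d.+1)
  (D : set 'rV[R]_p.+2)
  (F1 F2 : 'rV[R]_p.+2 -> 'rV[R]_d.+1) (f : 'rV[R]_m.+1 -> 'rV[R]_d.+1) :
  (1 < d.+1)%N ->
  alt_algebra_anti_inv mul one conj ->
  (1 <= m)%N -> (p < m)%N ->
  admissible_basis mul one conj v ->
  open D -> connected D ->
  (forall y, D y -> D (reflect_r y)) ->
  stem_function D F1 F2 ->
  C1_on D F1 -> C1_on D F2 ->
  induced_by mul v D F1 F2 f ->
  C1_on ((@OmegaD R p m D)) f ->
  (forall x, (@OmegaD R p m D) x -> Dx mul v f x = 0) <->
  (forall y, D y -> rcoord y != 0 ->
     Dxp mul v F1 y - pd F2 y ord_max
       = (((m - p)%:R - 1) / rcoord y) *: F2 y /\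
     Dxp_bar mul v F2 y + pd F1 y ord_max = 0).
Proof.
move=> _ Halg _ hpm Hb Dopen _ Drefl Hstem HC1 HC2 Hind HCf.
have DF := Dx_formula Halg hpm Hb Dopen Drefl Hstem HC1 HC2 Hind.
split.
  move=> Hmono y Dy r0.
  have He := sphere_max R hpm.
  have He' := sphereN He.
  have h1 := Hmono _ (inOmega Drefl Dy He).
  have h2 := Hmono _ (inOmega Drefl Dy He').
  rewrite DF // in h1; rewrite DF // embAN (mNl Halg) in h2.
  set A := _ - _ - _ in h1 h2; set B := Dxp_bar _ _ _ _ + _ in h1 h2.
  have A0 : A = 0.
    apply: double_inj.
    have : (A + mul (embA v 'e_ord_max) B) + (A - mul (embA v 'e_ord_max) B) = 0.
      by rewrite h1 h2 addr0.
    by rewrite addrACA subrr addr0 addr0.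
  have B0 : B = 0.
    rewrite A0 add0r in h1.
    have := omega_omega Halg Hb He B; rewrite h1 (m0r Halg) => /eqP.
    by rewrite eq_sym oppr_eq0 => /eqP.
  split => //.
  by apply/eqP; rewrite -subr_eq0; apply/eqP; rewrite -A0.
move=> Hrel x [y [w [Dy [r0 [Hw ->]]]]].
have [rn0|rz] := eqVneq (rcoord y) 0; last first.
  rewrite DF //; case: (Hrel y Dy rz) => hA ->.
  by rewrite hA subrr (m0r Halg) addr0.
set x0 := xp_embed m y + rcoord y *: w.
have Ox0 : OmegaD D x0 := inOmega Drefl Dy Hw.
have hc := @Dx_cvg R d m mul one conj Halg v f _ HCf x0 Ox0.
set e := (delta_mx 0 ord_max : 'rV[R]_m.+1).
set er := (delta_mx 0 ord_max : 'rV[R]_p.+2).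
pose P := fun h : R => h *: e + x0.
have x0E : x0 = xp_embed m y by rewrite /x0 rn0 scale0r addr0.
have key : forall h, 0 < h -> D (h *: er + y) ->
    OmegaD D (P h) /\ Dx mul v f (P h) = 0.
  move=> h h0 Dh.
  have eP : P h = xp_embed m (h *: er + y) + rcoord (h *: er + y) *: e.
    by rewrite /P xp_r rcoord_r rn0 addr0 x0E addrC.
  have rh : rcoord (h *: er + y) != 0 by rewrite rcoord_r rn0 addr0 gt_eqF.
  rewrite eP; split; first by apply: inOmega => //; exact: sphere_max.
  rewrite DF //; last exact: sphere_max.
  by case: (Hrel _ Dh rh) => hA ->; rewrite hA subrr (m0r Halg) addr0.
have nD : \forall h \near (0:R), D (h *: er + y).
  by apply: (near_open Dopen _ (line_deriv er y)); rewrite scale0r add0r.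
have nR : \forall h \near (0:R), 0 < h -> OmegaD D (P h) /\ Dx mul v f (P h) = 0.
  by near=> h => h0; apply: key => //; near: h.
have cP : {for 0, continuous P}.
  have [dv _] := line_deriv e x0.
  by apply: differentiable_continuous; apply/derivable1_diffP.
have P0 : P 0 = x0 by rewrite /P scale0r add0r.
have HP : P @ (0:R)^'+ --> within (OmegaD D) (nbhs x0).
  move=> U hU.
  have cU : \forall h \near (0:R), OmegaD D (P h) -> U (P h).
    by apply: (cP (fun z => OmegaD D z -> U z)); rewrite P0; exact: hU.
  suff : \forall h \near (0:R), 0 < h -> U (P h) by [].
  near=> h => h0.
  have [Oh _] : OmegaD D (P h) /\ Dx mul v f (P h) = 0 by move: h0; near: h; exact: nR.
  by move: Oh; near: h; exact: cU.
have L1 : (fun h => Dx mul v f (P h)) @ (0:R)^'+ --> Dx mul v f x0 := cvg_comp _ _ HP hc.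
have L2 : (fun h => Dx mul v f (P h)) @ (0:R)^'+ --> (0 : 'rV[R]_d.+1).
  have E0 : {near (0:R)^'+, (fun _ => (0:'rV[R]_d.+1)) =1 (fun h => Dx mul v f (P h))}.
    suff : \forall h \near (0:R), 0 < h -> (0:'rV[R]_d.+1) = Dx mul v f (P h) by [].
    near=> h => h0.
    by have [_ ->] : OmegaD D (P h) /\ Dx mul v f (P h) = 0 by move: h0; near: h; exact: nR.
  apply: cvg_trans (near_eq_cvg E0) _; exact: cvg_cst.
exact: (cvg_unique _ L1 L2).
Unshelve. all: by end_near.
Qed.
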